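(* Let $\vec{G_1},\dots,\vec{G_k}$ be pairwise vertex-disjoint oriented graphs such that $\vec{G_1}$ is a DDMOG and, for every $2\le i\le k$, $\vec{G_i}$ is a DDMOG with $imb(\vec{G_i})=0$. Then the union $\vec{G}=\bigcup_{i=1}^k\vec{G_i}$ is a DDMOG.
   Context: An oriented graph is a finite digraph without loops such that whenever $(u,v)$ is an arc, $(v,u)$ is not. For a vertex $v$, $N^+(v)=\{x:(x,v)\text{ is an arc}\}$, $N^-(v)=\{x:(v,x)\text{ is an arc}\}$, $imb(v)=|N^+(v)|-|N^-(v)|$, and $imb(\vec{G})=\max_v|imb(v)|$. For a labeling $f$, $wt_f(v)=\sum_{x\in N^+(v)}f(x)-\sum_{x\in N^-(v)}f(x)$. A DDM labeling of an oriented graph on $n$ vertices is a bijection $f:V\to\{1,\dots,n\}$ with $wt_f(v)=0$ for all $v$; a DDMOG is an oriented graph admitting a DDM labeling. *)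

(* Defs.v *)
From mathcomp Require Import all_boot all_order all_algebra.
Set Implicit Arguments. Unset Strict Implicit. Unset Printing Implicit Defensive.
Import Order.TTheory GRing.Theory Num.Theory.
Local Open Scope ring_scope.

(* A digraph on a finite vertex type V is given by its arc relation a:
   a u v  <->  (u,v) is an arc. *)
Section OrientedGraphs.
Variables (V : finType) (a : rel V).

Definition oriented : Prop :=
  (forall v, ~~ a v v) /\ (forall u v, a u v -> ~~ a v u).

Definition Nplus (v : V) : {set V} := [set x | a x v].
Definition Nminus (v : V) : {set V} := [set x | a v x].

Definition imb (v : V) : int := (#|Nplus v|%:Z - #|Nminus v|%:Z).

Definition imbG : nat := (\max_(v : V) `|imb v|)%N.

Definition wt (f : V -> nat) (v : V) : int :=
  (\sum_(x in Nplus v) (f x)%:Z) - (\sum_(x in Nminus v) (f x)%:Z).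

Definition labeling (f : V -> nat) : Prop :=
  injective f /\ (forall v, (0 < f v <= #|V|)%N) /\
  (forall m, (0 < m <= #|V|)%N -> exists v, f v = m).

Definition DDM_labeling (f : V -> nat) : Prop :=
  labeling f /\ forall v, wt f v = 0.

Definition DDMOG : Prop := oriented /\ exists f, DDM_labeling f.

End OrientedGraphs.

(* The part of a graph on T consisting of the vertices of colour i
   (as an oriented graph on its own vertex set). *)
Definition part (T : finType) (c : T -> nat) (i : nat) : finType :=
  {x : T | c x == i}.
Definition part_rel (T : finType) (a : rel T) (c : T -> nat) (i : nat)
  : rel (part c i) := fun x y => a (val x) (val y).
Arguments part_rel {T} a c i.
Arguments DDMOG {V} a.
Arguments imbG {V} a.
Arguments oriented {V} a.

(* Main.v *)
Require Import Defs.
From mathcomp Require Import all_boot all_order all_algebra.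
From mathcomp Require Import zify.
From Stdlib Require Import ClassicalEpsilon.
Set Implicit Arguments. Unset Strict Implicit. Unset Printing Implicit Defensive.
Import Order.TTheory GRing.Theory Num.Theory.

Section Aux.
Variables (T : finType) (c : T -> nat) (i : nat).

Lemma big_part (R : Type) (idx : R) (op : Monoid.com_law idx)
   (P : pred T) (G : T -> R) :
  (forall x, P x -> c x = i) ->
  \big[op/idx]_(y in [set y : part c i | P (val y)]) G (val y) =
  \big[op/idx]_(x in [set x | P x]) G x.
Proof.
move=> hP.
rewrite [RHS](reindex_omap (val : part c i -> T) insub); last first.
  move=> x; rewrite inE => Px.
  by rewrite insubT ?(introT eqP (hP x Px)).
apply: eq_bigl => y; rewrite !inE valK /= eqxx andbT //.
Qed.

End Aux.

Theorem theorem5 (T : finType) (a : rel T) (k : nat) (c : T -> nat) :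
  (1 <= k)%N ->
  (forall v, (1 <= c v <= k)%N) ->
  (forall i, (1 <= i <= k)%N -> oriented (part_rel a c i)) ->
  (forall u v, a u v -> c u = c v) ->
  DDMOG (part_rel a c 1) ->
  (forall i, (2 <= i <= k)%N -> DDMOG (part_rel a c i) /\ imbG (part_rel a c i) = 0%N) ->
  DDMOG a.
Proof.
move=> hk hc hor hcc h1 hi.
split.
  split.
    move=> v; apply/negP => avv.
    have [hl _] := hor (c v) (hc v).
    by move/negP: (hl (exist _ v (eqxx (c v)))); apply.
  move=> u v auv; apply/negP => avu.
  have e : c u == c v by rewrite (hcc _ _ auv).
  have [_ hr] := hor (c v) (hc v).
  by move/negP: (hr (exist _ u e) (exist _ v (eqxx (c v))) auv); apply.
have ex : forall i, exists f : part c i -> nat,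
    (1 <= i <= k)%N -> DDM_labeling (part_rel a c i) f.
  move=> i; case: (boolP (1 <= i <= k)%N) => hik; last by exists (fun _ => 0%N).
  case: (boolP (i == 1%N)) => [/eqP -> | hi1].
    by case: h1 => _ [f hf]; exists f.
  have [[_ [f hf]] _] := hi i ltac:(lia).
  by exists f.
pose f i := proj1_sig (constructive_indefinite_description _ (ex i)).
have hf : forall i, (1 <= i <= k)%N -> DDM_labeling (part_rel a c i) (f i).
  by move=> i; rewrite /f; case: constructive_indefinite_description.
pose off i := #|[set x | (c x < i)%N]|.
pose n i := #|[set x | c x == i]|.
pose h i x := if (insub x : option (part c i)) is Some y then f i y else 0%N.
have hval : forall i (y : part c i), h i (val y) = f i y.
  by move=> i y; rewrite /h valK.
pose F v := (off (c v) + h (c v) v)%N.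
have hlab : forall i, (1 <= i <= k)%N ->
   injective (f i) /\ (forall y, (0 < f i y <= n i)%N).
  move=> i hik; have [[hinj [hr _]] _] := hf i hik.
  split => // y; have := hr y.
  suff -> : #|part c i| = n i by [].
  by rewrite card_sig /n cardsE.
have hh : forall v, (0 < h (c v) v <= n (c v))%N.
  move=> v; have -> : v = val (exist (fun x => c x == c v) v (eqxx _)) by [].
  rewrite hval; exact: ((hlab _ (hc v)).2).
have offS : forall i, (off i + n i)%N = off i.+1.
  move=> i; rewrite /off /n -(cardsID [set x | (c x < i)%N] [set x | (c x < i.+1)%N]).
  congr (_ + _)%N; apply: eq_card => x; rewrite !inE; lia.
have offM : forall i j, (i <= j)%N -> (off i <= off j)%N.
  move=> i j hij; apply: subset_leq_card; apply/subsetP => x; rewrite !inE; lia.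
have offT : off k.+1 = #|T|.
  rewrite /off; apply: eq_card => x; rewrite !inE; have := hc x; lia.
have off1 : off 1 = 0%N.
  rewrite /off; apply: eq_card0 => x; rewrite !inE; have := hc x; lia.
have Fb : forall v, (off (c v) < F v <= off (c v).+1)%N.
  move=> v; rewrite -offS /F; have := hh v; lia.
have Finj : injective F.
  move=> u v e.
  have [lt|gt|eq] := ltngtP (c u) (c v).
  - have := Fb u; have := Fb v; have := offM _ _ lt; lia.
  - have := Fb u; have := Fb v; have := offM _ _ gt; lia.
  have e2 : h (c u) u = h (c u) v.
    by move: e; rewrite /F -eq; lia.
  have ev : c v == c u by rewrite eq.
  have := e2; have -> : u = val (exist (fun x => c x == c u) u (eqxx _)) by [].
  rewrite hval.
  have -> : v = val (exist (fun x => c x == c u) v ev) by [].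
  by rewrite hval => /(hlab _ (hc u)).1 /(congr1 val).
have Fr : forall v, (0 < F v <= #|T|)%N.
  move=> v; have := Fb v; have := offM (c v).+1 k.+1; have := hc v; lia.
exists F; split; first split => //; first split => //.
  move=> m hm.
  have lt : forall v, ((F v).-1 < #|T|)%N by move=> v; have := Fr v; lia.
  pose g v : 'I_#|T| := Ordinal (lt v).
  have ginj : injective g.
    move=> u v /(congr1 val) /= e; apply: Finj; have := Fr u; have := Fr v; lia.
  have ltm : (m.-1 < #|T|)%N by lia.
  have := inj_card_onto ginj _ (Ordinal ltm).
  rewrite card_ord leqnn => /(_ isT) /codomP [v /(congr1 val) /= e].
  exists v; have := Fr v; lia.
move=> v.
pose w : part c (c v) := exist _ v (eqxx (c v)).
have hw : wt (part_rel a c (c v)) (f (c v)) w = 0%R := (hf _ (hc v)).2 w.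
have sum_eq : forall (b : bool),
  (\sum_(x in [set x | if b then a x v else a v x]) (F x)%:Z =
   (off (c v))%:Z *+ #|[set y : part c (c v) | if b then a (val y) v else a v (val y)]| +
   \sum_(y in [set y : part c (c v) | if b then a (val y) v else a v (val y)]) (f (c v) y)%:Z)%R.
  move=> b.
  have hP : forall x, (if b then a x v else a v x) -> c x = c v.
    by case: b => x /hcc.
  transitivity (\sum_(x in [set x | if b then a x v else a v x]) ((off (c v))%:Z + (h (c v) x)%:Z))%R.
    apply: eq_bigr => x; rewrite inE => /hP hx; rewrite /F hx PoszD //.
  rewrite big_split sumr_const /=; congr (_ *+ _ + _)%R.
    rewrite -!sum1_card.
    exact: (esym (@big_part T c (c v) nat 0%N addn _ (fun _ => 1%N) hP)).
  rewrite -(@big_part T c (c v) int 0%R +%R _ (fun x => ((h (c v) x)%:Z)%R) hP).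
  by apply: eq_bigr => y _; rewrite hval.
move: hw; rewrite /wt /Nplus /Nminus.
have := sum_eq true; have := sum_eq false => /= -> ->.
set Sp := (\sum_(y in _) _)%R; set Sm := (\sum_(y in _) _)%R.
move=> hw.
have -> : forall (o p m : int) (p' m' : nat), (o *+ p' + p - (o *+ m' + m) = (o *+ p' - o *+ m') + (p - m))%R.
  by move=> o p m p' m'; rewrite opprD addrACA.
rewrite [X in (_ + X)%R]hw addr0.
case: (boolP (c v == 1%N)) => [/eqP -> | hv1].
  by rewrite off1 !mul0rn subrr.
have [_ himb] := hi (c v) ltac:(have := hc v; lia).
have := @leq_bigmax _ (fun w => absz (imb (part_rel a c (c v)) w)) w.
rewrite -/(imbG _) himb leqn0 absz_eq0 /imb /Nplus /Nminus subr_eq0 => /eqP [->].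
by rewrite subrr.
Qed.
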